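(* Let $n\ge 3$. The map $\phi_n:|\mathcal K_n|\to\partial(Root_n)$ is injective. Equivalently, if $\mathcal T_1,\mathcal T_2$ are nonempty admissible families and there exist positive reals $\{\alpha_{ij}\}_{[i,j)\in\mathcal T_1}$, $\{\beta_{ij}\}_{[i,j)\in\mathcal T_2}$ with $\sum\alpha_{ij}=1=\sum\beta_{ij}$ and $\sum_{[i,j)\in\mathcal T_1}\alpha_{ij}(e_i-e_j)=\sum_{[i,j)\in\mathcal T_2}\beta_{ij}(e_i-e_j)$, then $\mathcal T_1=\mathcal T_2$ and $\alpha_{ij}=\beta_{ij}$ for all $[i,j)\in\mathcal T_1$.
   Context: Identify $[n]$ with the vertices of a regular $n$-gon in $S^1$, labelled counterclockwise, with counterclockwise order $\preceq$; for $a\ne b\in[n]$, $[a,b)=\{z\in S^1:a\preceq z\prec b\}$. A finite collection of such arcs is admissible if any two distinct members $I,J$ are either intersecting and strictly nested, or disjoint with the sink of neither equal to the source of the other. $\mathcal K_n$ is the simplicial complex on the arcs $[i,j)$, $i\neq j$, whose simplices are the nonempty admissible families. $Root_n=\mathrm{Conv}\{e_i-e_j:i\ne j\}$ and $\phi_n$ is affine on each simplex of $\mathcal K_n$ with $\phi_n([i,j))=e_i-e_j$. *)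

(* Defs.v *)
From HB Require Import structures.
From mathcomp Require Import all_boot all_order all_algebra.
Set Implicit Arguments. Unset Strict Implicit. Unset Printing Implicit Defensive.
Import Order.TTheory GRing.Theory Num.Theory.

(* Vertices of the regular n-gon: 'I_n, labelled counterclockwise.
   An arc [a,b) is represented by the pair (a,b) with a != b;
   a is its source and b its sink. *)
Definition garc n := ('I_n * 'I_n)%type.

Definition is_arc n (a : garc n) : bool := a.1 != a.2.

Definition ccw n (i k : 'I_n) : nat := ((k + n - i) %% n)%N.

Definition arc_mem n (a : garc n) (k : 'I_n) : bool := (ccw a.1 k < ccw a.1 a.2)%N.

(* vertex set of the arc; the continuous half-open arc [a,b) in S^1 is the
   union of the half-open unit segments [v, v+1) over its vertices v, so
   intersection/inclusion of arcs coincide with those of the vertex sets. *)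
Definition arc_set n (a : garc n) : {set 'I_n} := [set k | arc_mem a k].

Definition admissible_pair n (I J : garc n) : bool :=
  ((arc_set I :&: arc_set J != set0) &&
     ((arc_set I \proper arc_set J) || (arc_set J \proper arc_set I)))
  || [&& [disjoint arc_set I & arc_set J], I.2 != J.1 & J.2 != I.1].

Definition admissible n (T : {set garc n}) : bool :=
  [forall I in T, forall J in T, (I != J) ==> admissible_pair I J].

Definition simplexK n (T : {set garc n}) : bool :=
  [&& T != set0, [forall a in T, is_arc a] & admissible T].

Local Open Scope ring_scope.

Definition eroot (R : nzRingType) n (a : garc n) : 'rV[R]_n :=
  \row_k ((k == a.1)%:R - (k == a.2)%:R).

(* Main.v *)
Require Import Defs.
From HB Require Import structures.
From mathcomp Require Import all_boot all_order all_algebra zify ring lra.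
Import Order.TTheory GRing.Theory Num.Theory.
Set Implicit Arguments. Unset Strict Implicit. Unset Printing Implicit Defensive.

Section Arith.
Variable n : nat.
Implicit Types i k : 'I_n.

Lemma ccwE i k : ccw i k = if (i <= k)%N then (k - i)%N else (k + n - i)%N.
Proof.
rewrite /ccw; have := ltn_ord k; have := ltn_ord i; case: (leqP i k) => h hi hk.
  have -> : (k + n - i = (k - i) + n)%N by lia.
  by rewrite modnDr modn_small //; lia.
by rewrite modn_small //; lia.
Qed.

Lemma predE k : (ord_pred k : nat) = if k == 0%N :> nat then (n - 1)%N else (k - 1)%N.
Proof.
rewrite /ord_pred /=; have := ltn_ord k; case: eqP => h hk.
  by rewrite h add0n modn_small //; lia.
have -> : ((k + n).-1 = (k - 1) + n)%N by lia.
by rewrite modnDr modn_small //; lia.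
Qed.

Lemma memE (a : garc n) k : arc_mem a k = (ccw a.1 k < ccw a.1 a.2)%N.
Proof. by []. Qed.

Ltac arith := rewrite ?memE ?ccwE ?predE /=;
  repeat match goal with |- context [if ?b then _ else _] =>
    lazymatch b with context [if _ then _ else _] => fail | _ => case: ifPn end end;
  move=> *; lia.

Lemma A1 (c : garc n) : is_arc c -> ~~ arc_mem c c.2.
Proof.
case: c => [i j]; rewrite /is_arc /=. have := ltn_ord i; have := ltn_ord j.
move=> ? ? hij; have : (i : nat) != j by []. move=> {}hij. rewrite memE /=. arith.
Qed.

Ltac dest c := let i := fresh "i" in let j := fresh "j" in
  case: c => i j; have := ltn_ord i; have := ltn_ord j; rewrite /is_arc /=.

Lemma neqE (i j : 'I_n) : (i != j) = ((i : nat) != j).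
Proof. by []. Qed.

Lemma A2 (c : garc n) : is_arc c -> arc_mem c (ord_pred c.2).
Proof. dest c; rewrite neqE; arith. Qed.

Lemma A4 (c : garc n) : is_arc c -> ~~ arc_mem c (ord_pred c.1).
Proof. dest c; rewrite neqE; arith. Qed.

Lemma A5 (c : garc n) : is_arc c -> arc_mem c c.1.
Proof. dest c; rewrite neqE; arith. Qed.

Lemma A3n (e : garc n) k : is_arc e -> arc_mem e k -> ~~ arc_mem e (ord_pred k) -> (k : nat) = e.1.
Proof. have := ltn_ord k; dest e; rewrite neqE; arith. Qed.
Lemma A3 (e : garc n) k : is_arc e -> arc_mem e k -> ~~ arc_mem e (ord_pred k) -> k = e.1.
Proof. by move=> *; apply: val_inj; apply: A3n. Qed.

Lemma A6n (e : garc n) k : is_arc e -> arc_mem e (ord_pred k) -> ~~ arc_mem e k -> (k : nat) = e.2.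
Proof. have := ltn_ord k; dest e; rewrite neqE; arith. Qed.
Lemma A6 (e : garc n) k : is_arc e -> arc_mem e (ord_pred k) -> ~~ arc_mem e k -> k = e.2.
Proof. by move=> *; apply: val_inj; apply: A6n. Qed.

Lemma ccw_inj (s x y : 'I_n) : ccw s x = ccw s y -> x = y.
Proof.
move=> h; apply: val_inj; move: h; have := ltn_ord s; have := ltn_ord x; have := ltn_ord y; arith.
Qed.

Lemma erootN (e : garc n) k : is_arc e ->
  ((k == e.1) + arc_mem e (ord_pred k) = arc_mem e k + (k == e.2))%N.
Proof.
have := ltn_ord k; dest e; rewrite neqE -!val_eqE /=; arith.
Qed.


Lemma inA (a : garc n) k : (k \in arc_set a) = arc_mem a k.
Proof. by rewrite inE. Qed.

Lemma adm_pair (T : {set garc n}) I J : admissible T -> I \in T -> J \in T -> I != J ->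
  admissible_pair I J.
Proof.
move=> /forallP/(_ I)/implyP h hI hJ hne; move: (h hI) => /forallP/(_ J)/implyP/(_ hJ).
by move/implyP; apply.
Qed.

Lemma adm_sub (T T' : {set garc n}) : admissible T -> T' \subset T -> admissible T'.
Proof.
move=> hT /subsetP sub; apply/forallP => I; apply/implyP => hI; apply/forallP => J.
apply/implyP => hJ; apply/implyP; exact: adm_pair hT (sub _ hI) (sub _ hJ).
Qed.

Lemma K (T : {set garc n}) c e : admissible T -> c \in T -> e \in T -> is_arc c -> is_arc e ->
  arc_mem e c.2 -> arc_set c \proper arc_set e.
Proof.
move=> hT hc he ac ae hm.
have ne : c != e by apply/eqP => E; move: hm; rewrite -E; apply/negP; exact: A1.
have := adm_pair hT hc he ne; rewrite /admissible_pair.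
case/orP => [/andP [_ /orP[] //] | /and3P [hd h1 h2]].
  move=> /proper_sub /subsetP sub; have := sub c.2; rewrite !inA => /(_ hm).
  by move/negP: (A1 ac).
have hp : ord_pred c.2 \in arc_set c by rewrite inA; exact: A2.
have := disjointFr hd hp; rewrite inA => /negbT hn.
by move: h1; rewrite (A3 ae hm hn) eqxx.
Qed.

Lemma K' (T : {set garc n}) c e : admissible T -> c \in T -> e \in T -> is_arc c -> is_arc e ->
  arc_mem e (ord_pred c.1) -> arc_set c \proper arc_set e.
Proof.
move=> hT hc he ac ae hm.
have ne : c != e by apply/eqP => E; move: hm; rewrite -E; apply/negP; exact: A4.
have := adm_pair hT hc he ne; rewrite /admissible_pair.
case/orP => [/andP [_ /orP[] //] | /and3P [hd h1 h2]].
  move=> /proper_sub /subsetP sub; have := sub (ord_pred c.1); rewrite !inA => /(_ hm).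
  by move/negP: (A4 ac).
have hp : c.1 \in arc_set c by rewrite inA; exact: A5.
have := disjointFr hd hp; rewrite inA => /negbT hn.
by move: h2; rewrite -(A6 ae hm hn) eqxx.
Qed.

Lemma uncovered (T : {set garc n}) : (0 < n)%N -> admissible T -> (forall e, e \in T -> is_arc e) ->
  exists k, forall e, e \in T -> ~~ arc_mem e k.
Proof.
move=> hn hT ar; case: (set_0Vmem T) => [-> | [c0 hc0]].
  by exists (Ordinal hn) => e; rewrite inE.
case: (@arg_maxnP _ c0 (mem T) (fun c => #|arc_set c|) hc0) => c hc hmax.
exists c.2 => e he; apply/negP => hm.
have := K hT hc he (ar _ hc) (ar _ he) hm => /proper_card.
by have := hmax e he; lia.
Qed.

Section Cov.
Variable R : realFieldType.
Local Open Scope ring_scope.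
Implicit Types (T : {set garc n}) (w alpha beta : garc n -> R) (a e : garc n) (c : R).

Definition cov (T : {set garc n}) (w : garc n -> R) (k : 'I_n) : R :=
  \sum_(e in T) w e * (arc_mem e k)%:R.

Definition good (T : {set garc n}) (w : garc n -> R) :=
  [/\ admissible T, forall e, e \in T -> is_arc e & forall e, e \in T -> 0 < w e].

Lemma sum_eroot (T : {set garc n}) (w : garc n -> R) k :
  (forall e, e \in T -> is_arc e) ->
  (\sum_(a in T) w a *: eroot R a) 0 k = cov T w k - cov T w (ord_pred k).
Proof.
move=> ar; rewrite summxE /cov -sumrB; apply: eq_bigr => e he.
rewrite !mxE -mulrBr; congr (_ * _).
have := congr1 (fun m => m%:R : R) (erootN k (ar _ he)); rewrite !natrD => h.
lra.
Qed.

Lemma cov_ge0 T w k : (forall e, e \in T -> 0 < w e) -> 0 <= cov T w k.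
Proof.
move=> pos; apply: sumr_ge0 => e he; apply: mulr_ge0; last exact: ler0n.
exact: ltW (pos _ he).
Qed.

Lemma cov0 T w k : (forall e, e \in T -> ~~ arc_mem e k) -> cov T w k = 0.
Proof. by move=> h; apply: big1 => e he; rewrite (negbTE (h _ he)) mulr0. Qed.

Lemma cov_rem T w a k : a \in T -> cov T w k = cov (T :\ a) w k + w a * (arc_mem a k)%:R.
Proof.
move=> ha; rewrite /cov (bigD1 a) //= addrC; congr (_ + _).
by apply: eq_bigl => e; rewrite in_setD1 andbC.
Qed.

Lemma covpos T w e k : (forall e, e \in T -> 0 < w e) -> e \in T -> arc_mem e k -> 0 < cov T w k.
Proof.
move=> pos he hm; rewrite (cov_rem _ _ he) hm mulr1.
have p2 : forall x, x \in T :\ e -> 0 < w x by move=> x /setD1P [_ /pos].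
have := @cov_ge0 (T :\ e) w k p2; have := pos _ he; lra.
Qed.

Lemma cov_ex T w k : 0 < cov T w k -> exists2 e, e \in T & arc_mem e k.
Proof.
move=> h; case: (boolP [exists e, (e \in T) && arc_mem e k]).
  by move=> /existsP [e /andP [he hm]]; exists e.
move=> /negP hn; exfalso; move: h; rewrite cov0 ?ltxx // => e he.
by apply/negP => hm; apply: hn; apply/existsP; exists e; rewrite he hm.
Qed.

Definition shift (w : garc n -> R) a c := fun x => w x - (x == a)%:R * c.

Lemma cov_shift T w a c k : a \in T -> cov T (shift w a c) k = cov T w k - c * (arc_mem a k)%:R.
Proof.
move=> ha; rewrite /cov /shift; under eq_bigr do rewrite mulrBl; rewrite sumrB; congr (_ - _).
rewrite (bigD1 a) //= eqxx mul1r big1 ?addr0 // => e /andP [_ /negbTE ->].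
by rewrite mul0r mul0r.
Qed.

Lemma good_sub T w a : good T w -> good (T :\ a) w.
Proof.
case=> h1 h2 h3; split.
- by apply: adm_sub h1 _; apply: subD1set.
- by move=> e /setD1P [_ /h2].
- by move=> e /setD1P [_ /h3].
Qed.

Lemma good_shift T w a c : good T w -> c < w a -> good T (shift w a c).
Proof.
case=> h1 h2 h3 hc; split => // e he; rewrite /shift.
case: eqP => [-> | _]; first by rewrite mul1r subr_gt0.
by rewrite mul0r subr0; exact: h3.
Qed.

Lemma memT2 T1 T2 alpha beta a : good T1 alpha -> good T2 beta ->
  (forall k, cov T1 alpha k = cov T2 beta k) -> a \in T1 ->
  (forall e, e \in T1 -> (#|arc_set e| <= #|arc_set a|)%N) -> a \in T2.
Proof.
move=> [ad1 ar1 p1] [ad2 ar2 p2] covE ha hmax.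
have hs : 0 < cov T2 beta a.1 by rewrite -covE; apply: (covpos p1 ha); exact: A5 (ar1 _ ha).
have [d0 hd0 hd0s] := cov_ex hs.
have hP : [pred x | (x \in T2) && arc_mem x a.1] d0 by rewrite /= hd0 hd0s.
case: (@arg_maxnP _ d0 [pred x | (x \in T2) && arc_mem x a.1] (fun x => #|arc_set x|) hP)
  => d /andP [hd hds] dmax.
have z1 : cov T1 alpha (ord_pred a.1) = 0.
  apply: cov0 => e he; apply/negP => hm.
  have := K' ad1 ha he (ar1 _ ha) (ar1 _ he) hm => /proper_card.
  by rewrite ltnNge hmax.
have dpred : ~~ arc_mem d (ord_pred a.1).
  by apply/negP => hm; have := covpos p2 hd hm; rewrite -covE z1 ltxx.
have d1 : a.1 = d.1 := A3 (ar2 _ hd) hds dpred.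
have z2 : cov T1 alpha a.2 = 0.
  apply: cov0 => e he; apply/negP => hm.
  have := K ad1 ha he (ar1 _ ha) (ar1 _ he) hm => /proper_card.
  by rewrite ltnNge hmax.
have da2 : ~~ arc_mem d a.2.
  by apply/negP => hm; have := covpos p2 hd hm; rewrite -covE z2 ltxx.
have z3 : cov T2 beta d.2 = 0.
  apply: cov0 => e he; apply/negP => hm.
  have hp := K ad2 hd he (ar2 _ hd) (ar2 _ he) hm.
  have hes : arc_mem e a.1.
    by move: (proper_sub hp) => /subsetP /(_ a.1); rewrite !inA; apply.
  have := dmax e; rewrite /= he hes => /(_ isT).
  by move: hp => /proper_card; rewrite ltnNge => /negP.
have ad2' : ~~ arc_mem a d.2.
  by apply/negP => hm; have := covpos p1 ha hm; rewrite covE z3 ltxx.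
have d2 : d.2 = a.2.
  apply: (@ccw_inj a.1); move: da2 ad2'; rewrite !memE -d1 => h1 h2.
  by apply/eqP; rewrite eqn_leq; move: h1 h2; rewrite -!leqNgt => -> ->.
have -> : a = d by rewrite [a]surjective_pairing [d]surjective_pairing d1 d2.
exact: hd.
Qed.


Lemma lt_case N T1 T2 alpha beta a :
  (forall T1 T2 alpha beta, (#|T1| + #|T2| <= N)%N -> good T1 alpha -> good T2 beta ->
     (forall k, cov T1 alpha k = cov T2 beta k) ->
     T1 = T2 /\ (forall x, x \in T1 -> alpha x = beta x)) ->
  (#|T1| + #|T2| <= N.+1)%N -> good T1 alpha -> good T2 beta ->
  (forall k, cov T1 alpha k = cov T2 beta k) -> a \in T1 -> a \in T2 ->
  alpha a < beta a -> False.
Proof.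
move=> IH hN g1 g2 covE ha1 ha2 hlt.
have hs : (#|T1 :\ a| + #|T2| <= N)%N.
  by move: hN; rewrite (cardsD1 a T1) ha1 /= -addnA add1n ltnS.
have covE' : forall k, cov (T1 :\ a) alpha k = cov T2 (shift beta a (alpha a)) k.
  move=> k; rewrite cov_shift // -covE (cov_rem _ _ ha1); lra.
have [E _] := IH _ _ _ _ hs (good_sub a g1) (good_shift g2 hlt) covE'.
by move: ha2; rewrite -E in_setD1 eqxx.
Qed.

Lemma helpN x y N : (1 + x + (1 + y) <= N.+1 -> x + y <= N)%N.
Proof. lia. Qed.

Lemma decomp N : forall T1 T2 alpha beta, (#|T1| + #|T2| <= N)%N -> good T1 alpha -> good T2 beta ->
     (forall k, cov T1 alpha k = cov T2 beta k) ->
     T1 = T2 /\ (forall x, x \in T1 -> alpha x = beta x).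
Proof.
elim: N => [|N IH] T1 T2 alpha beta hN g1 g2 covE.
  have e1 : T1 = set0 by apply: cards0_eq; lia.
  have e2 : T2 = set0 by apply: cards0_eq; lia.
  by rewrite e1 e2; split => // x; rewrite inE.
case: (set_0Vmem (T1 :|: T2)) => [E | [a0 ha0]].
  move/eqP: E; rewrite setU_eq0 => /andP [/eqP -> /eqP ->].
  by split => // x; rewrite inE.
case: (@arg_maxnP _ a0 (mem (T1 :|: T2)) (fun x => #|arc_set x|) ha0) => a ha hmax.
have [ha1 ha2] : a \in T1 /\ a \in T2.
  case/setUP: ha => h.
    split => //; apply: (memT2 g1 g2 covE h) => e he; apply: hmax; apply/setUP; left; exact: he.
  split => //; apply: (memT2 g2 g1 (fun k => esym (covE k)) h) => e he; apply: hmax.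
  by apply/setUP; right; exact: he.
case: (ltgtP (alpha a) (beta a)) => hab.
- by exfalso; apply: (lt_case IH hN g1 g2 covE ha1 ha2 hab).
- exfalso; apply: (lt_case IH _ g2 g1 (fun k => esym (covE k)) ha2 ha1 hab).
  by rewrite addnC.
have hs : (#|T1 :\ a| + #|T2 :\ a| <= N)%N.
  by move: hN; rewrite (cardsD1 a T1) (cardsD1 a T2) ha1 ha2 /=; apply: helpN.
have covE' : forall k, cov (T1 :\ a) alpha k = cov (T2 :\ a) beta k.
  move=> k; have := covE k; rewrite (cov_rem _ _ ha1) (cov_rem _ _ ha2) hab; lra.
have [E W] := IH _ _ _ _ hs (good_sub a g1) (good_sub a g2) covE'.
split; first by rewrite -(setD1K ha1) -(setD1K ha2) E.
move=> x hx; case: (eqVneq x a) => [-> // | hxa].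
by apply: W; rewrite in_setD1 hxa hx.
Qed.

Lemma constD (f : 'I_n -> R) (hn : (0 < n)%N) : (forall k, f k = f (ord_pred k)) ->
  forall k j, f k = f j.
Proof.
move=> h.
have H : forall (p : nat) (hi : (p < n)%N), f (Ordinal hi) = f (Ordinal hn).
  elim => [|p IHi] hi; first by congr f; apply: val_inj.
  rewrite h; have -> : ord_pred (Ordinal hi) = Ordinal (ltnW hi).
    by apply: val_inj => /=; rewrite modnDr modn_small // ltnW.
  exact: IHi.
move=> k j; transitivity (f (Ordinal hn)).
  by case: k => p hi; exact: H.
by case: j => p hi; symmetry; exact: H.
Qed.

End Cov.
End Arith.

Local Open Scope ring_scope.

Theorem mainTheorem6 (R : realFieldType) (n : nat) (hn : (3 <= n)%N)
  (T1 T2 : {set garc n}) (alpha beta : garc n -> R) :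
  simplexK T1 -> simplexK T2 ->
  (forall a, a \in T1 -> 0 < alpha a) ->
  (forall a, a \in T2 -> 0 < beta a) ->
  \sum_(a in T1) alpha a = 1 -> \sum_(a in T2) beta a = 1 ->
  \sum_(a in T1) alpha a *: eroot R a = \sum_(a in T2) beta a *: eroot R a ->
  T1 = T2 /\ (forall a, a \in T1 -> alpha a = beta a).
Proof.
move=> /and3P [_ /forallP ar1 ad1] /and3P [_ /forallP ar2 ad2] p1 p2 _ _ hsum.
have ar1' : forall e, e \in T1 -> is_arc e by move=> e he; move/implyP: (ar1 e); apply.
have ar2' : forall e, e \in T2 -> is_arc e by move=> e he; move/implyP: (ar2 e); apply.
have g1 : good T1 alpha by split.
have g2 : good T2 beta by split.
have hn0 : (0 < n)%N by clear -hn; lia.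
have key : forall k, cov T1 alpha k - cov T1 alpha (ord_pred k) =
                     cov T2 beta k - cov T2 beta (ord_pred k).
  move=> k; rewrite -(@sum_eroot n R T1 alpha k ar1') -(@sum_eroot n R T2 beta k ar2').
  by rewrite hsum.
pose D := fun k => cov T1 alpha k - cov T2 beta k.
have hD : forall k, D k = D (ord_pred k) by move=> k; rewrite /D; have := key k; lra.
have [k1 u1] := uncovered hn0 ad1 ar1'.
have [k2 u2] := uncovered hn0 ad2 ar2'.
have z1 : cov T1 alpha k1 = 0 := cov0 alpha u1.
have z2 : cov T2 beta k2 = 0 := cov0 beta u2.
have covE : forall k, cov T1 alpha k = cov T2 beta k.
  move=> k; have e1 := constD hn0 hD k k1; have e2 := constD hn0 hD k2 k1.
  have q1 := @cov_ge0 n R T1 alpha k2 p1; have q2 := @cov_ge0 n R T2 beta k1 p2.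
  move: e1 e2; rewrite /D z1 z2; lra.
exact: (decomp (leqnn _) g1 g2 covE).
Qed.
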